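(* Consider a stochastic mass-action reaction network as described in the context, with reactions partitioned into fast and slow ones and a finite accessible state space. Assume every fast component is strongly connected. Assume also that $\tilde n=A^fn$ takes a constant value $\tilde n^j$ on the $j$-th fast component, with distinct values on distinct components. Let $\pi_j$ be the unique invariant probability distribution of the fast dynamics on the $j$-th fast component. Set $L=\mathrm{diag}(\mathbf 1^T,\dots,\mathbf 1^T)$ and $\Pi=\mathrm{diag}(\pi_1,\dots,\pi_l)$. Then for $i\neq j$, $$(LK^s\Pi)_{ij}=\sum_{\ell\in S_{ij}}c_\ell\,E[h_\ell(n)\mid\tilde n=\tilde n^j]=\sum_{\ell\in S_{ij}}E[\mathcal R^s_\ell(n)\mid\tilde n=\tilde n^j].$$ Here $S_{ij}$ is the set of slow reactions that transform states of the $j$-th fast component into states of the $i$-th fast component. The conditional expectation is $E[f(n)\mid\tilde n=\tilde n^j]=\sum_{q}f(n^{j,q})\,\pi_{jq}$, where $n^{j,q}$ is the $q$-th state of the $j$-th fast component and $\pi_{jq}$ its invariant probability, i.e. $P(n=n^{j,q}\mid\tilde n=\tilde n^j)$.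
   Context: There are $m$ species and $r$ reactions. The state is $n\in\mathbb Z_{\ge0}^m$, the vector of molecule numbers. Reaction $\ell$ changes $n$ by the integer vector $\nu\mathcal E_{(\ell)}$, where $\nu$ is the $m\times p$ complex (stoichiometry) matrix and $\mathcal E_{(\ell)}$ is the $\ell$-th column of the $p\times r$ vertex-edge incidence matrix of the reaction graph. Reaction $\ell$ has stochastic mass-action rate (propensity) $\mathcal R_\ell(n)=c_\ell h_\ell(n)$, where $c_\ell>0$ is a rate constant and $h_\ell(n)=\prod_i\binom{n_i}{\nu_{i j(\ell)}}$, with $j(\ell)$ the reactant complex of reaction $\ell$. The reactions are split into fast and slow. $\mathcal R^s_\ell$ denotes the rate of a slow reaction, and $\mathcal E^f,\mathcal E^s$ denote the columns of $\mathcal E$ for fast and slow reactions. The finite accessible state space is ordered. $K^f$ (resp. $K^s$) is the transition matrix with, for states $p\neq q$, $(K)_{pq}$ equal to the sum of the rates $\mathcal R_\ell(q)$ of the fast (resp. slow) reactions $\ell$ with $p=q+\nu\mathcal E_{(\ell)}$. Its diagonal entries make the column sums zero. The fast components are the connected components of the fast-transition graph on states. Ordering states by component makes $K^f=\mathrm{diag}(K^f_1,\dots,K^f_l)$ block diagonal, and $K^s$ is partitioned conformally into blocks $K^s_{ij}$. $A^f$ is a matrix whose rows form a basis of $\mathcal N[(\nu\mathcal E^f)^T]$, so $\tilde n=A^fn$ is invariant under fast reactions. *)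

(* Defs.v *)
From HB Require Import structures.
From mathcomp Require Import all_boot all_order all_algebra.
Set Implicit Arguments. Unset Strict Implicit. Unset Printing Implicit Defensive.
Import Order.TTheory GRing.Theory Num.Theory.
Local Open Scope ring_scope.

(* Reaction graph on p complexes with r reactions: reaction l goes from the
   reactant complex [src l] to the product complex [tgt l]. *)
Definition incidence (p r : nat) (src tgt : 'I_r -> 'I_p) : 'M[int]_(p, r) :=
  \matrix_(k, l) ((nat_of_bool (k == tgt l))%:Z - (nat_of_bool (k == src l))%:Z).

Definition to_int (m : nat) (n : 'cV[nat]_m) : 'cV[int]_m :=
  map_mx (fun x : nat => x%:Z) n.

Definition reaction_vec (m p r : nat) (nu : 'M[nat]_(m, p))
  (src tgt : 'I_r -> 'I_p) (l : 'I_r) : 'cV[int]_m :=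
  map_mx (fun x : nat => x%:Z) nu *m col l (incidence src tgt).

Definition hprop (m p r : nat) (nu : 'M[nat]_(m, p)) (src : 'I_r -> 'I_p)
  (l : 'I_r) (n : 'cV[nat]_m) : nat :=
  (\prod_(i < m) 'C(n i ord0, nu i (src l)))%N.

Definition trans (m p r N : nat) (nu : 'M[nat]_(m, p)) (src tgt : 'I_r -> 'I_p)
  (st : 'I_N -> 'cV[nat]_m) (l : 'I_r) (q p' : 'I_N) : bool :=
  to_int (st p') == to_int (st q) + reaction_vec nu src tgt l.

Definition transK (R : ringType) (m p r N : nat) (nu : 'M[nat]_(m, p))
  (src tgt : 'I_r -> 'I_p) (c : 'I_r -> R) (st : 'I_N -> 'cV[nat]_m)
  (sel : pred 'I_r) : 'M[R]_N :=
  \matrix_(p', q)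
    if p' != q then
      \sum_(l | sel l && trans nu src tgt st l q p') c l * (hprop nu src l (st q))%:R
    else
      - \sum_(p'' | p'' != q)
          \sum_(l | sel l && trans nu src tgt st l q p'') c l * (hprop nu src l (st q))%:R.

Definition fast_edge (m p r N : nat) (nu : 'M[nat]_(m, p))
  (src tgt : 'I_r -> 'I_p) (st : 'I_N -> 'cV[nat]_m) (fast : pred 'I_r)
  : rel 'I_N :=
  fun q p' => (q != p') &&
    [exists l, [&& fast l, (0 < hprop nu src l (st q))%N & trans nu src tgt st l q p']].

(* the matrix nu E^f, written as an m x r matrix whose slow columns are zero
   (this does not change the null space of its transpose) *)
Definition nuEf (R : ringType) (m p r : nat) (nu : 'M[nat]_(m, p))
  (src tgt : 'I_r -> 'I_p) (fast : pred 'I_r) : 'M[R]_(m, r) :=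
  \matrix_(i, l) if fast l then ((reaction_vec nu src tgt l) i ord0)%:~R else 0.

(* L = diag(1^T, ..., 1^T) and Pi = diag(pi_1, ..., pi_l), with the states in
   their given order and block membership given by [comp] *)
Definition Lmat (R : ringType) (N nl : nat) (comp : 'I_N -> 'I_nl) : 'M[R]_(nl, N) :=
  \matrix_(i, q) (nat_of_bool (comp q == i))%:R.

Definition Pimat (R : ringType) (N nl : nat) (comp : 'I_N -> 'I_nl)
  (piv : 'I_N -> R) : 'M[R]_(N, nl) :=
  \matrix_(q, j) if comp q == j then piv q else 0.

Definition condE (R : ringType) (m N nl : nat) (st : 'I_N -> 'cV[nat]_m)
  (comp : 'I_N -> 'I_nl) (piv : 'I_N -> R) (j : 'I_nl) (f : 'cV[nat]_m -> R) : R :=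
  \sum_(q | comp q == j) f (st q) * piv q.

Definition Sij (m p r N nl : nat) (nu : 'M[nat]_(m, p))
  (src tgt : 'I_r -> 'I_p) (st : 'I_N -> 'cV[nat]_m) (fast : pred 'I_r)
  (comp : 'I_N -> 'I_nl) (i j : 'I_nl) (l : 'I_r) : bool :=
  ~~ fast l && [exists q, exists p', [&& comp q == j, comp p' == i,
        (0 < hprop nu src l (st q))%N & trans nu src tgt st l q p']].

(* Main.v *)
Require Import Defs.
From HB Require Import structures.
From mathcomp Require Import all_boot all_order all_algebra.
Import Order.TTheory GRing.Theory Num.Theory.
Local Open Scope ring_scope.

Lemma trans_R (R : nzRingType) (m p r N : nat) (nu : 'M[nat]_(m, p)) src tgt
  (st : 'I_N -> 'cV[nat]_m) (l : 'I_r) (q p' : 'I_N) :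
  trans nu src tgt st l q p' ->
  map_mx (fun x : nat => x%:R : R) (st p') =
  map_mx (fun x : nat => x%:R) (st q) +
  map_mx (fun z : int => z%:~R) (reaction_vec nu src tgt l).
Proof.
move/eqP=> H; apply/matrixP=> a b.
have := congr1 (fun M : 'cV[int]_m => (M a b)%:~R : R) H.
by rewrite !mxE /= rmorphD.
Qed.

Lemma trans_uniq (m p r N : nat) (nu : 'M[nat]_(m, p)) src tgt
  (st : 'I_N -> 'cV[nat]_m) (Hst : injective st) (l : 'I_r) (q p1 p2 : 'I_N) :
  trans nu src tgt st l q p1 -> trans nu src tgt st l q p2 -> p1 = p2.
Proof.
move=> /eqP H1 /eqP H2; apply: Hst; apply/matrixP=> a b.
have := congr1 (fun M : 'cV[int]_m => M a b) (etrans H1 (esym H2)).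
by rewrite !mxE => -[].
Qed.
Arguments trans_R R {m p r N nu src tgt st l q p'}.
Arguments trans_uniq {m p r N nu src tgt st} Hst {l q p1 p2}.

Theorem theorem3 (R : realFieldType) (m p r : nat)
  (nu : 'M[nat]_(m, p)) (src tgt : 'I_r -> 'I_p)
  (Hgraph : forall l, src l != tgt l)
  (c : 'I_r -> R) (Hc : forall l, 0 < c l)
  (fast : pred 'I_r)
  (N : nat) (st : 'I_N -> 'cV[nat]_m) (Hst : injective st)
  (Hclosed : forall (l : 'I_r) (q : 'I_N), (0 < hprop nu src l (st q))%N ->
      exists p' : 'I_N, trans nu src tgt st l q p')
  (nl : nat) (comp : 'I_N -> 'I_nl)
  (Hcomp : forall q p' : 'I_N, (comp q == comp p') =
      connect (fun x y => fast_edge nu src tgt st fast x y ||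
                          fast_edge nu src tgt st fast y x) q p')
  (Hcomp_surj : forall j : 'I_nl, exists q : 'I_N, comp q = j)
  (Hstrong : forall q p' : 'I_N, comp q = comp p' ->
      connect (fast_edge nu src tgt st fast) q p')
  (k : nat) (Af : 'M[R]_(k, m))
  (HAf : row_free Af && (Af == kermx (nuEf R nu src tgt fast))%MS)
  (nt : 'I_nl -> 'cV[R]_k)
  (Hnt : forall q : 'I_N, Af *m map_mx (fun x : nat => x%:R) (st q) = nt (comp q))
  (Hnt_inj : injective nt)
  (piv : 'I_N -> R)
  (Hpiv_ge0 : forall q, 0 <= piv q)
  (Hpiv_sum : forall j : 'I_nl, \sum_(q | comp q == j) piv q = 1)
  (Hpiv_inv : forall p' : 'I_N,
      \sum_(q | comp q == comp p') (transK nu src tgt c st fast) p' q * piv q = 0) :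
  forall i j : 'I_nl, i != j ->
    (Lmat R comp *m transK nu src tgt c st (predC fast) *m Pimat comp piv) i j
      = \sum_(l | Sij nu src tgt st fast comp i j l)
          c l * condE st comp piv j (fun n => (hprop nu src l n)%:R)
    /\
    \sum_(l | Sij nu src tgt st fast comp i j l)
          c l * condE st comp piv j (fun n => (hprop nu src l n)%:R)
      = \sum_(l | Sij nu src tgt st fast comp i j l)
          condE st comp piv j (fun n => c l * (hprop nu src l n)%:R).
Proof.
move=> i j nij; split; last first.
  apply: eq_bigr => l _; rewrite /condE mulr_sumr; apply: eq_bigr => q _.
  by rewrite mulrA.
set K := transK _ _ _ _ _ _.
have key : forall q, comp q = j ->
  \sum_(p' | comp p' == i) K p' q =
  \sum_(l | Sij nu src tgt st fast comp i j l) c l * (hprop nu src l (st q))%:R.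
  move=> q cq.
  have Hk : forall p', comp p' == i ->
      K p' q = \sum_(l | ~~ fast l && trans nu src tgt st l q p')
                  c l * (hprop nu src l (st q))%:R.
    move=> p' /eqP cp; rewrite /K /transK mxE.
    have -> : (p' != q) by apply/eqP=> E; move: nij; rewrite -cp -cq E eqxx.
    by [].
  rewrite (eq_bigr _ Hk) /=.
  rewrite (exchange_big_dep (fun l => ~~ fast l)) /=; last by move=> ? ? _ /andP[].
  rewrite [RHS](eq_bigl (fun l => ~~ fast l && Sij nu src tgt st fast comp i j l)); last first.
    by move=> l; rewrite /Sij; case: (fast l).
  rewrite [RHS]big_mkcondr /=; apply: eq_bigr => l sl.
  case: (boolP (0 < hprop nu src l (st q))%N) => hpos; last first.
    move: hpos; rewrite lt0n negbK => /eqP ->; rewrite mulr0.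
    by rewrite big1 ?if_same // => ? _; rewrite mulr0.
  case: (boolP (Sij nu src tgt st fast comp i j l)) => Sl.
    have [p1 tp1] := Hclosed l q hpos.
    have cp1 : comp p1 = i.
      move: Sl => /andP[_ /existsP[q0 /existsP[p0 /and4P[/eqP cq0 /eqP cp0 _ tp0]]]].
      apply: Hnt_inj; rewrite -cp0 -!Hnt.
      rewrite (trans_R R tp1) (trans_R R tp0) !mulmxDr; congr (_ + _).
      by rewrite !Hnt cq cq0.
    rewrite (bigD1 p1) /=; last by rewrite cp1 eqxx sl tp1.
    rewrite big1 ?addr0 // => p2 /andP[/andP[_ /andP[_ tp2]] ne].
    by move: ne; rewrite (trans_uniq Hst tp2 tp1) eqxx.
  rewrite big1 // => p2 /andP[/eqP cp2 /andP[_ tp2]].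
  exfalso; move/negP: Sl; apply; rewrite /Sij sl /=.
  apply/existsP; exists q; apply/existsP; exists p2.
  by rewrite cq cp2 !eqxx hpos tp2.
rewrite mxE.
transitivity (\sum_(q | comp q == j) piv q * \sum_(p' | comp p' == i) K p' q).
  rewrite (bigID (fun q => comp q == j)) /= [X in _ + X]big1 ?addr0; last first.
    by move=> q /negbTE cq; rewrite [Pimat _ _ _ _]mxE cq mulr0.
  apply: eq_bigr => q /eqP cq; rewrite [Pimat _ _ _ _]mxE cq eqxx mulrC; congr (_ * _).
  rewrite mxE (bigID (fun p' => comp p' == i)) /= [X in _ + X]big1 ?addr0; last first.
    by move=> p' /negbTE cp; rewrite mxE cp mul0r.
  by apply: eq_bigr => p' cp; rewrite mxE cp mul1r.
rewrite (eq_bigr (fun q => piv q * \sum_(l | Sij nu src tgt st fast comp i j l)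
             c l * (hprop nu src l (st q))%:R)); last first.
  by move=> q /eqP cq; rewrite key.
rewrite /condE; under [RHS]eq_bigr do rewrite mulr_sumr.
rewrite [RHS]exchange_big /=; apply: eq_bigr => q _; rewrite mulr_sumr.
by apply: eq_bigr => l _; rewrite mulrC -mulrA.
Qed.
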